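(* Let the problem, the cone $\mathcal{C}$, the algorithm $\widetilde A$ and the complexity be as in the context, and assume $n_0\ge1$. Assume $$R=\sup_{k\in\mathbb{N}}\frac{\lambda_{n_{k-1}}}{\lambda_{n_k}}<\infty.$$ Then $\mathrm{cost}(\widetilde A,\mathcal{C},\varepsilon,\rho)$ is essentially no worse than $\mathrm{comp}(\mathcal{A}(\mathcal{C}),\varepsilon,\rho)$. That is, there is a number $\omega>0$, depending only on $a$, $b$ and $R$, such that $$\mathrm{cost}(\widetilde A,\mathcal{C},\varepsilon,\rho)\le\mathrm{comp}(\mathcal{A}(\mathcal{C}),\omega\varepsilon,\rho)\quad\text{for all }\varepsilon,\rho>0.$$
   Context: Let $\mathcal{F}$ and $\mathcal{G}$ be separable Hilbert spaces with orthonormal bases $(u_i)_{i\in\mathbb{N}}$ and $(v_i)_{i\in\mathbb{N}}$. Write $f=\sum_i\widehat f_iu_i$ with $\|f\|_{\mathcal{F}}=\|(\widehat f_i)_i\|_{\ell^2}$, and similarly for $\mathcal{G}$. Let $S:\mathcal{F}\to\mathcal{G}$ be the linear operator $S(f)=\sum_i\lambda_i\widehat f_iv_i$, where $\lambda_1\ge\lambda_2\ge\cdots>0$ and $\lambda_i\to0$. For $n\ge0$ let $A_n(f)=\sum_{i=1}^n\lambda_i\widehat f_iv_i$; it uses the $n$ values $\widehat f_1,\dots,\widehat f_n$. Let $\mathcal{B}_\rho=\{f:\|f\|_{\mathcal{F}}\le\rho\}$. For $\mathcal{H}\subseteq\mathcal{F}$, $\mathcal{A}(\mathcal{H})$ is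 the set of deterministic algorithms $A:\mathcal{H}\times(0,\infty)\to\mathcal{G}$ with $\|S(f)-A(f,\varepsilon)\|_{\mathcal{G}}\le\varepsilon$ for all $f\in\mathcal{H}$ and all $\varepsilon>0$. Such an algorithm adaptively samples finitely many bounded linear functionals of $f$, and its output depends on $f$ only through those values. Costs are defined as follows: - $\mathrm{cost}(A,f,\varepsilon)$ is the number of functional values used; - $\mathrm{cost}(A,\mathcal{H},\varepsilon,\rho)=\sup\{\mathrm{cost}(A,f,\varepsilon):f\in\mathcal{H}\cap\mathcal{B}_\rho\}$; - $\mathrm{comp}(\mathcal{A}(\mathcal{H}),\varepsilon,\rho)=\min_{A\in\mathcal{A}(\mathcal{H})}\mathrm{cost}(A,\mathcal{H},\varepsilon,\rho)$. Let $n_0<n_1<\cdots$ be a strictly increasing, unbounded sequence of non-negative integers. For $j\in\mathbb{N}=\{1,2,\dots\}$ let $\sigma_j(f)=\|(\lambda_i\widehat f_i)_{i=n_{j-1}+1}^{n_j}\|_{\ell^2}$. Fix $0<b<1<a$ and let $\mathcal{C}=\{f\in\mathcal{F}:\sigma_{j+r}(f)\le ab^r\sigma_j(f)\ \forall j,r\in\mathbb{N}\}$. The algorithm $\widetilde A$ works as follows. Given $f\in\mathcal{C}$ and $\varepsilon>0$, for $j=1,2,\dots$ it computes $\sigma_j(f)$. At the first $j$ with $\sigma_j(f)\le\varepsilon\sqrt{1-b^2}/(ab)$, it returns $A_{n_j}(f)$. *)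

(* Defs.v *)
From Stdlib Require Import Reals List.
From Coquelicot Require Import Coquelicot.
Import ListNotations.
Open Scope R_scope.

(* Coordinates are 0-based: paper index i (>=1) corresponds to index i-1 here.
   Elements of F and G are represented by their coefficient sequences
   (identification via the orthonormal bases, an isometric isomorphism
   F ~ l^2, G ~ l^2). *)

Definition l2 (f : nat -> R) : Prop := ex_series (fun i => f i ^ 2).
Definition nrm (f : nat -> R) : R := sqrt (Series (fun i => f i ^ 2)).

Definition bounded_linear (L : (nat -> R) -> R) : Prop :=
  (forall f g, l2 f -> l2 g -> L (fun i => f i + g i) = L f + L g) /\
  (forall c f, l2 f -> L (fun i => c * f i) = c * L f) /\
  (exists C, forall f, l2 f -> Rabs (L f) <= C * nrm f).

(* The solution operator S(f) = sum_i lam_i f_i v_i. *)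
Definition Sop (lam : nat -> R) (f : nat -> R) : nat -> R := fun i => lam i * f i.

(* A deterministic adaptive algorithm: given the tolerance eps and the list
   of functional values observed so far, it chooses the next functional,
   decides whether to stop, and (when stopping) produces its output, which
   depends on f only through the observed values. *)
Record algorithm := {
  query : R -> list R -> ((nat -> R) -> R);
  stop : R -> list R -> Prop;
  output : R -> list R -> (nat -> R) }.

Fixpoint data (A : algorithm) (eps : R) (f : nat -> R) (k : nat) : list R :=
  match k with
  | O => []
  | S k => let d := data A eps f k in d ++ [query A eps d f]
  end.

Definition stops_at (A : algorithm) (eps : R) (f : nat -> R) (k : nat) : Prop :=
  stop A eps (data A eps f k) /\
  (forall k', (k' < k)%nat -> ~ stop A eps (data A eps f k')).

Definition well_formed (A : algorithm) : Prop :=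
  forall eps d, 0 < eps -> bounded_linear (query A eps d) /\ l2 (output A eps d).

Definition solves (lam : nat -> R) (H : (nat -> R) -> Prop) (A : algorithm) : Prop :=
  well_formed A /\
  forall f eps, H f -> 0 < eps ->
    exists k, stops_at A eps f k /\
      nrm (fun i => Sop lam f i - output A eps (data A eps f k) i) <= eps.

Definition cost (A : algorithm) (H : (nat -> R) -> Prop) (eps rho : R) : Rbar :=
  Lub_Rbar (fun x => exists f k, H f /\ nrm f <= rho /\ stops_at A eps f k /\ x = INR k).

(* comp(A(H), eps, rho) = min over A in A(H) of cost(A, H, eps, rho)
   (+oo if no algorithm has finite cost) *)
Definition complexity (lam : nat -> R) (H : (nat -> R) -> Prop) (eps rho : R) : Rbar :=
  Glb_Rbar (fun x => exists A, solves lam H A /\ cost A H eps rho = Finite x).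

(* sigma_j(f) for j >= 1: l^2 norm of (lam_i f_i) over paper indices
   n_{j-1}+1 .. n_j, i.e. 0-based indices n_{j-1} .. n_j - 1. *)
Definition sigma (lam : nat -> R) (nseq : nat -> nat) (f : nat -> R) (j : nat) : R :=
  sqrt (sum_n_m (fun i => (lam i * f i) ^ 2) (nseq (j - 1)%nat) (nseq j - 1)%nat).

Definition inC (lam : nat -> R) (nseq : nat -> nat) (a b : R) (f : nat -> R) : Prop :=
  l2 f /\
  forall j r, (1 <= j)%nat -> (1 <= r)%nat ->
    sigma lam nseq f (j + r) <= a * b ^ r * sigma lam nseq f j.

Definition Atilde (lam : nat -> R) (nseq : nat -> nat) (a b : R) : algorithm :=
  {| query := fun eps d => fun f => f (length d);
     stop := fun eps d =>
       exists j, (1 <= j)%nat /\ nseq j = length d /\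
         sigma lam nseq (fun i => nth i d 0) j <= eps * sqrt (1 - b ^ 2) / (a * b);
     output := fun eps d => fun i =>
       if (i <? length d)%nat then lam i * nth i d 0 else 0 |}.

(* paper ratio lam_{n_{k-1}} / lam_{n_k}, k >= 1, in 0-based indexing *)
Definition ratio (lam : nat -> R) (nseq : nat -> nat) (k : nat) : R :=
  lam (nseq (k - 1)%nat - 1)%nat / lam (nseq k - 1)%nat.

(* Main.v *)
Require Import Defs.
From Stdlib Require Import Reals List Lia Lra Psatz Classical FunctionalExtensionality Arith.
From Coquelicot Require Import Coquelicot.
Import ListNotations.
Open Scope R_scope.

Lemma sum0 : forall n m, sum_n_m (fun _ => 0) n m = 0.
Proof. intros. apply (sum_n_m_const_zero (G:=R_AbelianMonoid)). Qed.

Lemma sumSm : forall (a : nat -> R) n m, (n <= S m)%nat ->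
  sum_n_m a n (S m) = sum_n_m a n m + a (S m).
Proof. intros. rewrite sum_n_Sm by auto. reflexivity. Qed.

Lemma sum_chasles : forall (a : nat -> R) n m k, (n <= S m)%nat -> (m <= k)%nat ->
  sum_n_m a n k = sum_n_m a n m + sum_n_m a (S m) k.
Proof. intros. rewrite (sum_n_m_Chasles a n m k) by auto. reflexivity. Qed.

Lemma sum_le_loc : forall (a b : nat -> R) n m,
  (forall k, (n <= k <= m)%nat -> a k <= b k) -> sum_n_m a n m <= sum_n_m b n m.
Proof.
  intros a b n m H. induction m.
  - destruct n.
    + rewrite !sum_n_n. apply H; lia.
    + rewrite !sum_n_m_zero by lia. apply Rle_refl.
  - destruct (le_lt_dec n (S m)).
    + destruct (Nat.eq_dec n (S m)).
      * subst. rewrite !sum_n_n. apply H; lia.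
      * rewrite !sumSm by lia. apply Rplus_le_compat. apply IHm. intros; apply H; lia.
        apply H; lia.
    + rewrite !sum_n_m_zero by lia. apply Rle_refl.
Qed.

Lemma sum_nonneg : forall (a : nat -> R) n m, (forall k, 0 <= a k) -> 0 <= sum_n_m a n m.
Proof.
  intros. apply Rle_trans with (sum_n_m (fun _ => 0) n m). rewrite sum0; lra.
  apply sum_n_m_le. auto.
Qed.

Lemma ex_series_zero : ex_series (fun _ : nat => 0).
Proof.
  apply ex_series_ext with (fun n => (1/2)^n * 0).
  intros; apply Rmult_0_r.
  apply ex_series_scal_r. apply ex_series_geom. rewrite Rabs_right; lra.
Qed.

Lemma Series_zero : Series (fun _ : nat => 0) = 0.
Proof.
  rewrite (Series_ext _ (fun n => 0 * 0)) by (intros; ring).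
  rewrite (Series_scal_l 0 (fun _ => 0)). ring.
Qed.

Lemma ex_series_finsupp : forall (x : nat -> R) N,
  (forall m, (N <= m)%nat -> x m = 0) -> ex_series x.
Proof.
  intros x N H. apply (proj2 (ex_series_incr_n x N)).
  apply ex_series_ext with (fun _ => 0). intros; rewrite H; auto; lia.
  apply ex_series_zero.
Qed.

Lemma Series_finsupp : forall (x : nat -> R) N,
  (forall m, (S N <= m)%nat -> x m = 0) -> Series x = sum_n_m x 0 N.
Proof.
  intros x N H. rewrite (Series_incr_n x (S N)) by (auto; lia || (eapply ex_series_finsupp; eauto)).
  rewrite (Series_ext _ (fun _ => 0)). rewrite Series_zero.
  simpl. rewrite <- sum_n_Reals. unfold sum_n. ring.
  intros; apply H; lia.
Qed.

Lemma sum_le_Series : forall (x : nat -> R) p q, (forall n, 0 <= x n) -> ex_series x ->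
  sum_n_m x p q <= Series x.
Proof.
  intros x p q Hp He.
  rewrite (Series_incr_n x (S q)) by (auto; lia).
  simpl. rewrite <- sum_n_Reals. unfold sum_n.
  assert (0 <= Series (fun k => x (S q + k)%nat)).
  { apply Rle_trans with (Series (fun _ => 0)). rewrite Series_zero; lra. apply Series_le. intros; split; auto; lra.
    apply (ex_series_incr_n x (S q)); auto. }
  assert (sum_n_m x p q <= sum_n_m x 0 q).
  { destruct p. lra.
    destruct (le_lt_dec (S p) q).
    - rewrite (sum_chasles x 0 p q) by lia.
      pose proof (sum_nonneg x 0 p Hp). lra.
    - rewrite sum_n_m_zero by lia. apply sum_nonneg; auto. }
  simpl in *; lra.
Qed.

Lemma l2_plus : forall f g, l2 f -> l2 g -> l2 (fun i => f i + g i).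
Proof.
  unfold l2; intros f g Hf Hg.
  apply (ex_series_le (K:=R_AbsRing) (V:=R_CompleteNormedModule)) with (fun i => 2 * f i ^2 + 2 * g i ^ 2).
  intros n. change (Rabs ((f n + g n)^2) <= 2 * f n ^2 + 2 * g n ^ 2). rewrite Rabs_right.
  pose proof (pow2_ge_0 (f n - g n)); nra. pose proof (pow2_ge_0 (f n + g n)); lra.
  apply (ex_series_plus (fun i => 2 * f i ^2) (fun i => 2 * g i ^2)).
  apply (ex_series_scal_l 2 (fun i => f i ^ 2)); auto.
  apply (ex_series_scal_l 2 (fun i => g i ^ 2)); auto.
Qed.

Lemma l2_scal : forall c f, l2 f -> l2 (fun i => c * f i).
Proof.
  unfold l2; intros c f Hf.
  apply ex_series_ext with (fun i => f i ^2 * c^2). intros; simpl; ring.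
  apply ex_series_scal_r; auto.
Qed.

Lemma l2_finsupp : forall f N, (forall m, (N <= m)%nat -> f m = 0) -> l2 f.
Proof.
  intros f N H. unfold l2. apply ex_series_finsupp with N.
  intros; rewrite H; auto. ring.
Qed.

Lemma Series_sq_nonneg : forall f, l2 f -> 0 <= Series (fun i => f i ^ 2).
Proof.
  intros. apply Rle_trans with (Series (fun _ => 0)). rewrite Series_zero; lra.
  apply Series_le; auto.
  intros; split; [lra| nra].
Qed.

Lemma parallelogram : forall u v, l2 u -> l2 v ->
  Series (fun i => (u i + v i)^2) + Series (fun i => (u i - v i)^2)
  = 2 * Series (fun i => u i ^2) + 2 * Series (fun i => v i ^ 2).
Proof.
  intros u v Hu Hv.
  assert (H1 := l2_plus u v Hu Hv).
  assert (H2 := l2_plus u (fun i => -1 * v i) Hu (l2_scal (-1) v Hv)).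
  unfold l2 in *.
  rewrite <- Series_plus; auto.
  2: { eapply ex_series_ext; [|exact H2]. intros; simpl; ring. }
  rewrite <- !Series_scal_l. rewrite <- Series_plus.
  apply Series_ext; intros; ring.
  apply (ex_series_scal_l 2 (fun i => u i ^ 2)); auto.
  apply (ex_series_scal_l 2 (fun i => v i ^ 2)); auto.
Qed.
Definition lin (L : (nat->R)->R) :=
  (forall f g, l2 f -> l2 g -> L (fun i => f i + g i) = L f + L g) /\
  (forall c f, l2 f -> L (fun i => c * f i) = c * L f).
Definition supp (h : nat -> R) (Sl : list nat) := forall j, ~ In j Sl -> h j = 0.
Definition ev (i : nat) : nat -> R := fun j => if Nat.eqb j i then 1 else 0.

Lemma list_bound : forall Sl : list nat, exists N, forall j, In j Sl -> (j < N)%nat.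
Proof.
  induction Sl as [|x Sl [N HN]].
  - exists 0%nat. intros j [].
  - exists (Nat.max (S x) N). intros j [<-|Hj]. lia. specialize (HN j Hj). lia.
Qed.

Lemma supp_l2 : forall h Sl, supp h Sl -> l2 h.
Proof.
  intros h Sl Hs. destruct (list_bound Sl) as [N HN].
  apply l2_finsupp with N. intros m Hm. apply Hs. intro Hi. specialize (HN m Hi). lia.
Qed.

Lemma ev_l2 : forall i, l2 (ev i).
Proof. intros i. apply supp_l2 with [i]. intros j Hj. unfold ev.
  destruct (Nat.eqb_spec j i); auto. subst; exfalso; apply Hj; left; auto. Qed.

Lemma lin_zero : forall L, lin L -> L (fun _ => 0) = 0.
Proof.
  intros L [Ha Hm].
  rewrite (functional_extensionality (fun _ : nat => 0) (fun i => 0 * (fun _ => 0) i))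
    by (intros; simpl; ring).
  rewrite Hm. ring. apply l2_finsupp with 0%nat. auto.
Qed.

Lemma lin_decomp : forall L, lin L -> forall Sl, (forall i, In i Sl -> L (ev i) = 0) ->
  forall h, supp h Sl -> L h = 0.
Proof.
  intros L HL. induction Sl as [|i Sl IH]; intros Hev h Hs.
  - rewrite (functional_extensionality h (fun _ => 0)). apply lin_zero; auto.
    intros j; apply Hs; auto.
  - set (h1 := fun j => if Nat.eqb j i then 0 else h j).
    assert (Hh1 : supp h1 Sl).
    { intros j Hj. unfold h1. destruct (Nat.eqb_spec j i); auto.
      apply Hs. intros [E|E]; auto. }
    rewrite (functional_extensionality h (fun j => h1 j + (fun j => h i * ev i j) j)).
    2: { intros j. unfold h1, ev. destruct (Nat.eqb_spec j i); subst; ring. }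
    destruct HL as [Ha Hm].
    rewrite Ha. rewrite Hm. rewrite IH; auto. rewrite Hev. ring. left; auto.
    intros; apply Hev; right; auto.
    apply ev_l2. apply supp_l2 with Sl; auto. apply l2_scal, ev_l2.
Qed.

Lemma kernel_aux : forall n (Ls : list ((nat -> R) -> R)), length Ls = n -> (forall L, In L Ls -> lin L) ->
  forall Sl : list nat, NoDup Sl -> (length Ls < length Sl)%nat ->
  exists h, supp h Sl /\ (exists j, h j <> 0) /\ (forall L, In L Ls -> L h = 0).
Proof.
  induction n as [|n IHn]; intros Ls Hn Hlin Sl Hnd Hlen.
  - destruct Ls; [|simpl in Hn; lia].
    destruct Sl as [|i Sl]. simpl in Hlen; lia.
    exists (ev i). split; [|split].
    + intros j Hj. unfold ev. destruct (Nat.eqb_spec j i); auto. subst; exfalso; apply Hj; left; auto.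
    + exists i. unfold ev. rewrite Nat.eqb_refl. lra.
    + intros L [].
  - destruct Ls as [|L Ls]; [simpl in Hn; lia|]. simpl in Hn. injection Hn; intro Hn'.
    assert (IH := IHn).
  - assert (HL : lin L) by (apply Hlin; left; auto).
    destruct (classic (exists i, In i Sl /\ L (ev i) <> 0)) as [[i [Hi Hc]]|Hno].
    + destruct (in_split i Sl Hi) as [S1 [S2 ES]]. subst Sl.
      destruct (NoDup_remove _ _ _ Hnd) as [Hnd' Hni].
      set (c := L (ev i)).
      set (P := fun x : nat -> R => fun j => x j + (- (L x / c)) * ev i j).
      assert (HP : forall x, l2 x -> L (P x) = 0).
      { intros x Hx. destruct HL as [Ha Hm]. unfold P.
        rewrite (Ha x (fun j => - (L x / c) * ev i j)); auto.
        rewrite Hm. fold c. field. auto. apply ev_l2. apply l2_scal, ev_l2. }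
      assert (HPl : forall x, l2 x -> l2 (P x)).
      { intros x Hx. unfold P. apply l2_plus; auto. apply l2_scal, ev_l2. }
      assert (HPa : forall x y, l2 x -> l2 y -> P (fun j => x j + y j) = (fun j => P x j + P y j)).
      { intros x y Hx Hy. unfold P. apply functional_extensionality; intros j.
        destruct HL as [Ha Hm]. rewrite Ha; auto. field. auto. }
      assert (HPm : forall a x, l2 x -> P (fun j => a * x j) = (fun j => a * P x j)).
      { intros a x Hx. unfold P. apply functional_extensionality; intros j.
        destruct HL as [Ha Hm]. rewrite Hm; auto. field. auto. }
      destruct (IH (map (fun M => fun x => M (P x)) Ls)) with (Sl := S1 ++ S2)
        as [g [Hgs [[j0 Hj0] Hgk]]]; auto.
      { rewrite length_map; auto. }
      { intros M' HM'. apply in_map_iff in HM'. destruct HM' as [M [<- HM]].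
        assert (HlM : lin M) by (apply Hlin; right; auto).
        destruct HlM as [Ma Mm]. split.
        - intros f1 g1 Hf Hg. rewrite (HPa f1 g1 Hf Hg). apply (Ma (P f1) (P g1)); auto.
        - intros a1 f1 Hf. rewrite (HPm a1 f1 Hf). apply (Mm a1 (P f1)); auto. }
      { rewrite length_map. rewrite length_app in *. simpl in Hlen. lia. }
      assert (Hgl : l2 g) by (apply supp_l2 with (S1 ++ S2); auto).
      exists (P g). split; [|split].
      * intros j Hj. unfold P. rewrite Hgs. unfold ev. destruct (Nat.eqb_spec j i).
        subst. exfalso. apply Hj. apply in_or_app. right. left. auto. ring.
        intro Hj'. apply Hj. apply in_app_or in Hj'. apply in_or_app. destruct Hj' as [Q|Q]; auto.
        right; right; auto.
      * exists j0. unfold P, ev. destruct (Nat.eqb_spec j0 i).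
        subst. exfalso. apply Hni. destruct (classic (In i (S1 ++ S2))); auto.
        exfalso; apply Hj0; apply Hgs; auto.
        rewrite Rmult_0_r, Rplus_0_r. auto.
      * intros M [<-|HM]. apply HP; auto.
        apply (Hgk (fun x => M (P x))). apply in_map_iff. exists M; auto.
    + destruct (IH Ls Hn' (fun M HM => Hlin M (or_intror HM)) Sl Hnd) as [h [Hs [Hnz Hk]]].
      simpl in Hlen; lia.
      exists h. split; [|split]; auto.
      intros M [<-|HM]; auto.
      apply lin_decomp with Sl; auto.
      intros i Hi. destruct (classic (L (ev i) = 0)); auto.
      exfalso; apply Hno; exists i; auto.
Qed.

Lemma kernel : forall Ls : list ((nat -> R) -> R), (forall L, In L Ls -> lin L) ->
  forall Sl : list nat, NoDup Sl -> (length Ls < length Sl)%nat ->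
  exists h, supp h Sl /\ (exists j, h j <> 0) /\ (forall L, In L Ls -> L h = 0).
Proof. intros. eapply kernel_aux; eauto. Qed.

Lemma sqrt_le_sq : forall X e, sqrt X <= e -> X <= e ^ 2.
Proof.
  intros X e H. destruct (Rle_lt_dec 0 X).
  - pose proof (sqrt_sqrt X r). pose proof (sqrt_pos X). nra.
  - nra.
Qed.

Lemma data_plus : forall A e f0 h k, (forall d, bounded_linear (query A e d)) ->
  l2 f0 -> l2 h -> (forall m, (m < k)%nat -> query A e (data A e f0 m) h = 0) ->
  forall m, (m <= k)%nat -> data A e (fun i => f0 i + h i) m = data A e f0 m.
Proof.
  intros A e f0 h k Hbl Hf Hh Hk m. induction m; intros Hm.
  - reflexivity.
  - simpl. rewrite IHm by lia. f_equal. f_equal.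
    destruct (Hbl (data A e f0 m)) as [Ha _]. rewrite Ha; auto. rewrite Hk; [ring|lia].
Qed.

Lemma stops_unique : forall A e f k1 k2, stops_at A e f k1 -> stops_at A e f k2 -> k1 = k2.
Proof.
  intros A e f k1 k2 [H1 H1'] [H2 H2']. destruct (Nat.lt_trichotomy k1 k2) as [L|[L|L]]; auto.
  - exfalso; apply (H2' k1); auto.
  - exfalso; apply (H1' k2); auto.
Qed.

Lemma fool : forall lam (H : (nat -> R) -> Prop) A e f0 k h,
  solves lam H A -> 0 < e -> l2 f0 -> l2 h ->
  l2 (Sop lam f0) -> l2 (Sop lam h) ->
  H (fun i => f0 i + h i) -> H (fun i => f0 i - h i) ->
  stops_at A e f0 k ->
  (forall m, (m < k)%nat -> query A e (data A e f0 m) h = 0) ->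
  Series (fun i => Sop lam h i ^ 2) <= e ^ 2.
Proof.
  intros lam H A e f0 k h [Hwf Hsol] He Hf Hh HSf HSh Hp Hm Hst Hk.
  assert (Hbl : forall d, bounded_linear (query A e d)) by (intros d; apply (Hwf e d He)).
  assert (Hmh : l2 (fun i => -1 * h i)) by (apply l2_scal; auto).
  assert (Hk' : forall m, (m < k)%nat -> query A e (data A e f0 m) (fun i => -1 * h i) = 0).
  { intros m Hm'. destruct (Hbl (data A e f0 m)) as [_ [Hs _]]. rewrite Hs; auto. rewrite Hk; auto; ring. }
  assert (Eg : (fun i => f0 i - h i) = (fun i => f0 i + -1 * h i)).
  { apply functional_extensionality; intros; ring. }
  assert (D1 := data_plus A e f0 h k Hbl Hf Hh Hk).
  assert (D2 : forall m, (m <= k)%nat -> data A e (fun i => f0 i - h i) m = data A e f0 m).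
  { rewrite Eg. apply (data_plus A e f0 _ k Hbl Hf Hmh Hk'). }
  assert (St : forall g, (forall m, (m <= k)%nat -> data A e g m = data A e f0 m) ->
     H g -> nrm (fun i => Sop lam g i - output A e (data A e f0 k) i) <= e).
  { intros g Dg Hg. destruct (Hsol g e Hg He) as [k' [Hst' Hn]].
    assert (k' = k).
    { apply (stops_unique A e g); auto. destruct Hst as [S1 S2]. split.
      rewrite Dg; auto. intros k'' Hk''. rewrite Dg; [|lia]. auto. }
    subst k'. rewrite Dg in Hn; auto. }
  set (O := output A e (data A e f0 k)).
  assert (HO : l2 O) by (apply (Hwf e _ He)).
  set (u := fun i => Sop lam f0 i - O i).
  set (v := Sop lam h).
  assert (Hu : l2 u).
  { unfold u. eapply ex_series_ext. 2: apply (l2_plus _ _ HSf (l2_scal (-1) O HO)).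
    intros; simpl; ring. }
  assert (N1 := St _ D1 Hp). assert (N2 := St _ D2 Hm).
  apply sqrt_le_sq in N1. apply sqrt_le_sq in N2.
  fold O in N1, N2.
  rewrite (Series_ext _ (fun i => (u i + v i) ^ 2)) in N1 by (intros; unfold u, v, Sop; simpl; ring).
  rewrite (Series_ext _ (fun i => (u i - v i) ^ 2)) in N2 by (intros; unfold u, v, Sop; simpl; ring).
  pose proof (parallelogram u v Hu HSh).
  pose proof (Series_sq_nonneg u Hu).
  fold v. lra.
Qed.

Definition Qs (lam : nat -> R) (nseq : nat -> nat) (f : nat -> R) (j : nat) : R :=
  sum_n_m (fun i => (lam i * f i)^2) (nseq (j - 1)%nat) (nseq j - 1)%nat.

Lemma sigma_Qs : forall lam nseq f j, Defs.sigma lam nseq f j = sqrt (Qs lam nseq f j).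
Proof. reflexivity. Qed.

Lemma Qs_nonneg : forall lam nseq f j, 0 <= Qs lam nseq f j.
Proof. intros. unfold Qs. apply sum_nonneg. intros; apply pow2_ge_0. Qed.

Lemma lam_mono : forall lam, (forall i, lam (S i) <= lam i) -> forall i j, (i <= j)%nat -> lam j <= lam i.
Proof.
  intros lam H i j Hij. induction Hij. lra. specialize (H m). lra.
Qed.

Lemma nseq_lt : forall nseq : nat -> nat, (forall k, (nseq k < nseq (S k))%nat) ->
  forall i j, (i < j)%nat -> (nseq i < nseq j)%nat.
Proof.
  intros nseq H i j Hij. induction Hij. apply H. specialize (H m). lia.
Qed.

Lemma nseq_le : forall nseq : nat -> nat, (forall k, (nseq k < nseq (S k))%nat) ->
  forall i j, (i <= j)%nat -> (nseq i <= nseq j)%nat.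
Proof.
  intros nseq H i j Hij. destruct (Nat.eq_dec i j). subst; lia.
  pose proof (nseq_lt nseq H i j). lia.
Qed.

Lemma Qs_zero_above : forall lam nseq, (forall k, (nseq k < nseq (S k))%nat) ->
  forall g J j, (forall m, (nseq J <= m)%nat -> g m = 0) -> (J < j)%nat ->
  Qs lam nseq g j = 0.
Proof.
  intros lam nseq Hinc g J j Hg Hj. unfold Qs.
  rewrite (sum_n_m_ext_loc _ (fun _ => 0)). apply sum0.
  intros k Hk. rewrite Hg. simpl; ring.
  pose proof (nseq_le nseq Hinc J (j-1)). lia.
Qed.

Lemma inC_zero_above1 : forall lam nseq a b, (forall k, (nseq k < nseq (S k))%nat) ->
  0 < b -> 1 < a ->
  forall g, (forall m, (nseq 1%nat <= m)%nat -> g m = 0) -> inC lam nseq a b g.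
Proof.
  intros lam nseq a b Hinc Hb Ha g Hg. split.
  - apply l2_finsupp with (nseq 1%nat); auto.
  - intros j r Hj Hr. rewrite !sigma_Qs.
    rewrite (Qs_zero_above lam nseq Hinc g 1) by (auto; lia).
    rewrite sqrt_0. apply Rmult_le_pos. apply Rmult_le_pos. lra. apply pow_le; lra.
    apply sqrt_pos.
Qed.

Fixpoint fstar (nseq : nat -> nat) (c : nat -> R) (J : nat) : nat -> R :=
  match J with
  | O => fun _ => 0
  | S J' => fun m => if Nat.eqb (S m) (nseq (S J')) then c (S J') else fstar nseq c J' m
  end.

Fixpoint Csum (nseq : nat -> nat) (w : nat -> R) (c : nat -> R) (J : nat) : R :=
  match J with
  | O => 0
  | S J' => Csum nseq w c J' + (w (nseq (S J') - 1)%nat * c (S J'))^2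
  end.

Section FS.
Variable nseq : nat -> nat.
Hypothesis Hinc : forall k, (nseq k < nseq (S k))%nat.
Hypothesis H0 : (1 <= nseq 0)%nat.

Lemma fs_S : forall c J m, fstar nseq c (S J) m = if Nat.eqb (S m) (nseq (S J)) then c (S J) else fstar nseq c J m.
Proof. reflexivity. Qed.

Lemma fs_zero_above : forall c J m, (nseq J <= m)%nat -> fstar nseq c J m = 0.
Proof.
  intros c J. induction J; intros m Hm. reflexivity. rewrite fs_S.
  destruct (Nat.eqb_spec (S m) (nseq (S J))). lia. apply IHJ. specialize (Hinc J). lia.
Qed.

Lemma fs_stable : forall c J i m, (i <= J)%nat -> (S m <= nseq i)%nat -> fstar nseq c J m = fstar nseq c i m.
Proof.
  intros c J. induction J; intros i m Hi Hm.
  - assert (i = 0%nat) by lia. subst; auto.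
  - destruct (Nat.eq_dec i (S J)). subst; auto.
    rewrite fs_S. destruct (Nat.eqb_spec (S m) (nseq (S J))).
    + assert (Hij : (i <= J)%nat) by lia. pose proof (nseq_le nseq Hinc i J Hij). pose proof (Hinc J). lia.
    + apply IHJ; lia.
Qed.

Lemma fs_block : forall c w J i, (S i <= J)%nat ->
  sum_n_m (fun m => (w m * fstar nseq c J m)^2) (nseq i) (nseq (S i) - 1)
  = (w (nseq (S i) - 1)%nat * c (S i))^2.
Proof.
  intros c w J i Hi.
  rewrite (sum_n_m_ext_loc _ (fun m => (w m * fstar nseq c (S i) m)^2)).
  2: { intros k Hk. rewrite (fs_stable c J (S i)); auto. specialize (Hinc i). lia. }
  assert (Hlt := Hinc i).
  destruct (Nat.eq_dec (nseq i) (nseq (S i) - 1)) as [E|E].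
  - rewrite <- E. rewrite sum_n_n. rewrite E. rewrite fs_S.
    replace (Nat.eqb (S (nseq (S i) - 1)) (nseq (S i))) with true. auto.
    symmetry. apply Nat.eqb_eq. lia.
  - replace (nseq (S i) - 1)%nat with (S (nseq (S i) - 2)) at 1 by lia.
    rewrite sumSm by lia.
    rewrite (sum_n_m_ext_loc _ (fun _ => 0)). rewrite sum0.
    replace (S (nseq (S i) - 2)) with (nseq (S i) - 1)%nat by lia.
    rewrite fs_S. replace (Nat.eqb (S (nseq (S i) - 1)) (nseq (S i))) with true. simpl; ring.
    symmetry. apply Nat.eqb_eq. lia.
    intros k Hk. rewrite fs_S. destruct (Nat.eqb_spec (S k) (nseq (S i))). lia.
    rewrite fs_zero_above by lia. simpl; ring.
Qed.

Lemma fs_prefix : forall c w J' J, (J <= J')%nat ->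
  sum_n_m (fun m => (w m * fstar nseq c J' m)^2) 0 (nseq J - 1) = Csum nseq w c J.
Proof.
  intros c w J'. induction J; intros HJ.
  - simpl. rewrite (sum_n_m_ext_loc _ (fun _ => 0)). apply sum0.
    intros k Hk. rewrite (fs_stable c J' 0) by lia. simpl. ring.
  - assert (Hlt := Hinc J).
    rewrite (sum_chasles _ 0 (nseq J - 1) (nseq (S J) - 1)) by lia.
    rewrite IHJ by lia. replace (S (nseq J - 1)) with (nseq J).
    rewrite fs_block by lia. simpl. ring.
    pose proof (nseq_le nseq Hinc 0 J). lia.
Qed.

End FS.

Lemma pow_le1 : forall b n, 0 <= b <= 1 -> b ^ n <= 1.
Proof. intros b n Hb. induction n; simpl. lra. pose proof (pow_le b n (proj1 Hb)). nra. Qed.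

Lemma pow_dec : forall b m n, 0 <= b <= 1 -> (m <= n)%nat -> b ^ n <= b ^ m.
Proof.
  intros b m n Hb Hmn. replace n with (m + (n - m))%nat by lia. rewrite pow_add.
  pose proof (pow_le1 b (n - m) Hb). pose proof (pow_le b m (proj1 Hb)). nra.
Qed.

Lemma sum_lin : forall (u v : nat -> R) al be n m,
  sum_n_m (fun k => al * u k + be * v k) n m = al * sum_n_m u n m + be * sum_n_m v n m.
Proof.
  intros u v al be n m. induction m.
  - destruct n. rewrite !sum_n_n. auto. rewrite !sum_n_m_zero by lia. change (@eq R 0 (al * 0 + be * 0)). ring.
  - destruct (le_lt_dec n (S m)).
    + destruct (Nat.eq_dec n (S m)).
      * subst. rewrite !sum_n_n. auto.
      * rewrite !sumSm by lia. rewrite IHm. change (@eq R (al * sum_n_m u n m + be * sum_n_m v n m + (al * u (S m) + be * v (S m))) (al * (sum_n_m u n m + u (S m)) + be * (sum_n_m v n m + v (S m)))). ring.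
    + rewrite !sum_n_m_zero by lia. change (@eq R 0 (al * 0 + be * 0)). ring.
Qed.

Definition dlt (a : R) := (a^2 - 1) / (2 * a^2 + 3).

Lemma dlt_facts : forall a, 1 < a -> 0 < dlt a /\ dlt a < 1/2 /\ (1 + dlt a)^2 <= a^2 * (1 - 2 * dlt a).
Proof.
  intros a Ha. unfold dlt. assert (0 < 2 * a^2 + 3) by nra.
  assert (1 < a^2) by nra.
  split; [|split].
  - apply Rdiv_lt_0_compat; nra.
  - assert (E : (a^2-1)/(2*a^2+3) = 1/2 - (5/2)/(2*a^2+3)) by (field; lra).
    rewrite E. assert (0 < (5/2)/(2*a^2+3)) by (apply Rdiv_lt_0_compat; lra). lra.
  - replace (1 + (a ^ 2 - 1) / (2 * a ^ 2 + 3)) with ((3 * a^2 + 2) / (2 * a^2 + 3)) by (field; lra).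
    replace (1 - 2 * ((a ^ 2 - 1) / (2 * a ^ 2 + 3))) with (5 / (2 * a^2 + 3)) by (field; lra).
    unfold Rdiv. rewrite Rpow_mult_distr.
    set (t := / (2 * a^2 + 3)). assert (0 < t) by (apply Rinv_0_lt_compat; lra).
    assert (E : (2 * a^2 + 3) * t = 1) by (unfold t; field; lra).
    assert ((3 * a ^ 2 + 2) ^ 2 <= a^2 * 5 * (2 * a^2 + 3)) by nra.
    replace (a ^ 2 * (5 * t)) with (a^2 * 5 * (2 * a^2 + 3) * t * t) by (replace (a^2*5*(2*a^2+3)*t*t) with (a^2*5*t*((2*a^2+3)*t)) by ring; rewrite E; ring).
    simpl. nra.
Qed.

Lemma pert_up : forall x y d, 0 < d -> (x + y)^2 <= (1 + d) * x^2 + (1 + /d) * y^2.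
Proof.
  intros x y d Hd. assert (0 <= (d * x - y)^2) by apply pow2_ge_0.
  assert (0 <= /d) by (left; apply Rinv_0_lt_compat; auto).
  assert (E : d * /d = 1) by (field; lra).
  assert (2 * x * y <= d * x^2 + /d * y^2).
  { apply Rmult_le_reg_l with d; auto. replace (d * (d * x ^ 2 + / d * y ^ 2)) with (d*d*x^2 + y^2 * (d * /d)) by ring.
    rewrite E. nra. }
  nra.
Qed.

Lemma pert_lo : forall x y d, 0 < d -> (1 - d) * x^2 - /d * y^2 <= (x + y)^2.
Proof.
  intros x y d Hd. assert (0 <= /d) by (left; apply Rinv_0_lt_compat; auto).
  assert (E : d * /d = 1) by (field; lra).
  assert (- (2 * x * y) <= d * x^2 + /d * y^2).
  { apply Rmult_le_reg_l with d; auto. replace (d * (d * x ^ 2 + / d * y ^ 2)) with (d*d*x^2 + y^2 * (d * /d)) by ring.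
    rewrite E. assert (0 <= (d * x + y)^2) by apply pow2_ge_0. nra. }
  assert (0 <= y^2) by apply pow2_ge_0. nra.
Qed.

Section Cone.
Variables (lam : nat -> R) (nseq : nat -> nat) (a b : R).
Hypothesis Hlam : forall i, 0 < lam i.
Hypothesis Hinc : forall k, (nseq k < nseq (S k))%nat.
Hypothesis H0 : (1 <= nseq 0)%nat.
Hypothesis Hb : 0 < b < 1.
Hypothesis Ha : 1 < a.

Definition cK (K : R) : nat -> R := fun i => K * b ^ i / lam (nseq i - 1)%nat.

Lemma Qs_fstar : forall K J i, (1 <= i <= J)%nat ->
  Qs lam nseq (fstar nseq (cK K) J) i = (K * b ^ i)^2.
Proof.
  intros K J i Hi. destruct i as [|i]. lia. unfold Qs.
  replace (S i - 1)%nat with i by lia.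
  rewrite fs_block; auto. 2: lia. unfold cK. f_equal. field.
  apply Rgt_not_eq, Hlam.
Qed.

Lemma cone_pert : forall K J h, 0 < K -> (1 <= J)%nat ->
  (forall m, (nseq J <= m)%nat -> h m = 0) ->
  (forall i, Qs lam nseq h i <= (dlt a * K * b ^ J)^2) ->
  inC lam nseq a b (fun m => fstar nseq (cK K) J m + h m).
Proof.
  intros K J h HK HJ Hh HQ.
  set (fs := fstar nseq (cK K) J).
  destruct (dlt_facts a Ha) as [Hd1 [Hd2 Hd3]]. set (d := dlt a) in *.
  split.
  - apply l2_finsupp with (nseq J). intros m Hm. rewrite Hh by auto.
    unfold fs. rewrite fs_zero_above; auto. ring.
  - intros j r Hj Hr. rewrite !sigma_Qs.
    assert (Har : 0 <= a * b ^ r) by (apply Rmult_le_pos; [lra| apply pow_le; lra]).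
    destruct (le_lt_dec (j + r) J) as [Hjr|Hjr].
    2: { rewrite (Qs_zero_above lam nseq Hinc _ J) by (auto; intros m Hm; rewrite Hh by auto;
           unfold fs; rewrite fs_zero_above; auto; ring).
         rewrite sqrt_0. apply Rmult_le_pos; auto. apply sqrt_pos. }
    set (X := (K * b ^ j)^2).
    set (be := (b ^ r)^2).
    assert (HX : 0 <= X) by apply pow2_ge_0.
    assert (Hbe0 : 0 <= be) by apply pow2_ge_0.
    assert (Hbe1 : be <= 1).
    { unfold be. pose proof (pow_le1 b r ltac:(lra)). pose proof (pow_le b r ltac:(lra)). nra. }
    assert (Eeta : (d * K * b ^ J)^2 <= d^2 * X * be).
    { unfold X, be. pose proof (pow_dec b (j + r) J ltac:(lra) Hjr).
      pose proof (pow_le b J ltac:(lra)). rewrite pow_add in H.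
      replace ((d * K * b ^ J) ^ 2) with (d^2 * K^2 * (b^J)^2) by ring.
      replace (d ^ 2 * (K * b ^ j) ^ 2 * (b ^ r) ^ 2) with (d^2 * K^2 * (b^j * b^r)^2) by ring.
      apply Rmult_le_compat_l. nra. apply pow_incr. split; auto. }
    assert (Qup : Qs lam nseq (fun m => fs m + h m) (j + r) <= (1 + d)^2 * X * be).
    { apply Rle_trans with ((1 + d) * Qs lam nseq fs (j + r) + (1 + /d) * Qs lam nseq h (j + r)).
      - unfold Qs. rewrite <- sum_lin. apply sum_n_m_le. intros k.
        replace ((lam k * (fs k + h k))^2) with ((lam k * fs k + lam k * h k)^2) by ring.
        replace ((lam k * fs k)^2) with ((lam k * fs k)^2) by ring.
        apply pert_up; auto.
      - unfold fs. rewrite Qs_fstar by lia. rewrite pow_add.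
        specialize (HQ (j + r)%nat).
        assert (E : (K * (b ^ j * b ^ r)) ^ 2 = X * be) by (unfold X, be; ring). rewrite E.
        assert (E2 : /d * d = 1) by (field; lra).
        assert (0 <= /d) by (left; apply Rinv_0_lt_compat; auto).
        assert ((1 + /d) * Qs lam nseq h (j + r) <= (1 + /d) * (d^2 * X * be)) by
          (apply Rmult_le_compat_l; lra).
        replace ((1 + / d) * (d ^ 2 * X * be)) with ((d^2 + d * (/d * d)) * X * be) in H1 by ring.
        rewrite E2 in H1. nra. }
    assert (Qlo : (1 - 2 * d) * X <= Qs lam nseq (fun m => fs m + h m) j).
    { apply Rle_trans with ((1 - d) * Qs lam nseq fs j + (- /d) * Qs lam nseq h j).
      - unfold fs. rewrite Qs_fstar by lia. fold X.
        specialize (HQ j).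
        assert (E2 : /d * d = 1) by (field; lra).
        assert (0 <= /d) by (left; apply Rinv_0_lt_compat; auto).
        assert (/d * Qs lam nseq h j <= /d * (d^2 * X * be)) by (apply Rmult_le_compat_l; lra).
        replace (/d * (d^2 * X * be)) with (d * (/d * d) * X * be) in H1 by ring.
        rewrite E2 in H1. assert (d * X * be <= d * X) by (pose proof (Rmult_le_pos d X); nra). nra.
      - unfold Qs. rewrite <- sum_lin. apply sum_n_m_le. intros k.
        replace ((lam k * (fs k + h k))^2) with ((lam k * fs k + lam k * h k)^2) by ring.
        pose proof (pert_lo (lam k * fs k) (lam k * h k) d Hd1). lra. }
    assert (Qs lam nseq (fun m => fs m + h m) (j + r) <= (a * b ^ r)^2 * Qs lam nseq (fun m => fs m + h m) j).
    { apply Rle_trans with ((1 + d)^2 * X * be). auto.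
      apply Rle_trans with (a^2 * be * ((1 - 2 * d) * X)).
      - assert (0 <= X * be) by (apply Rmult_le_pos; auto).
        replace (a ^ 2 * be * ((1 - 2 * d) * X)) with ((a^2 * (1 - 2 * d)) * (X * be)) by ring.
        replace ((1 + d) ^ 2 * X * be) with ((1 + d) ^ 2 * (X * be)) by ring.
        apply Rmult_le_compat_r; auto.
      - replace ((a * b ^ r) ^ 2) with (a^2 * be) by (unfold be; ring).
        apply Rmult_le_compat_l; auto. apply Rmult_le_pos; auto. nra. }
    rewrite <- (sqrt_pow2 (a * b ^ r)) by auto. rewrite <- sqrt_mult.
    apply sqrt_le_1_alt; auto. apply pow2_ge_0. apply Qs_nonneg.
Qed.

End Cone.

Section FB.
Variables (lam : nat -> R) (nseq : nat -> nat) (a b Rs : R).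
Hypothesis Hlam : forall i, 0 < lam i.
Hypothesis Hdec : forall i, lam (S i) <= lam i.
Hypothesis Hinc : forall k, (nseq k < nseq (S k))%nat.
Hypothesis H0 : (1 <= nseq 0)%nat.
Hypothesis Hb : 0 < b < 1.
Hypothesis Ha : 1 < a.
Hypothesis HR : forall k, (1 <= k)%nat -> ratio lam nseq k <= Rs.

Lemma Csum_S : forall w c J, Csum nseq w c (S J) = Csum nseq w c J + (w (nseq (S J) - 1)%nat * c (S J))^2.
Proof. reflexivity. Qed.

Definition U J := Csum nseq (fun _ => 1) (cK lam nseq b 1) J.

Lemma U_nonneg : forall J, 0 <= U J.
Proof. induction J; unfold U in *; simpl. lra. pose proof (pow2_ge_0 (1 * cK lam nseq b 1 (S J))). lra. Qed.

Lemma Csum_scale : forall K J, Csum nseq (fun _ => 1) (cK lam nseq b K) J = K^2 * U J.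
Proof. intros K J. induction J. unfold U; simpl; ring. unfold U in *. rewrite !Csum_S, IHJ. unfold cK.
  field. apply Rgt_not_eq, Hlam. Qed.

Lemma lam_ratio : forall k, (1 <= k)%nat -> lam (nseq (k - 1) - 1)%nat <= Rs * lam (nseq k - 1)%nat.
Proof.
  intros k Hk. specialize (HR k Hk). unfold ratio in HR.
  pose proof (Hlam (nseq k - 1)%nat).
  apply Rmult_le_compat_r with (r := lam (nseq k - 1)%nat) in HR; [|lra].
  unfold Rdiv in HR. rewrite Rmult_assoc, Rinv_l in HR by lra. lra.
Qed.

Lemma Rs_pos : 0 < Rs.
Proof.
  pose proof (lam_ratio 1 (le_n 1)). pose proof (Hlam (nseq (1 - 1) - 1)%nat).
  pose proof (Hlam (nseq 1 - 1)%nat). destruct (Rle_lt_dec Rs 0); auto. nra.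
Qed.

Lemma U_step : forall J1, (1 <= J1)%nat -> U (S J1) <= (1 + b^2 * Rs^2) * U J1.
Proof.
  intros J1 HJ1. unfold U. simpl Csum at 1. fold (U J1).
  assert (Hlast : (cK lam nseq b 1 J1)^2 <= U J1).
  { destruct J1. lia. unfold U; simpl. fold (U J1). pose proof (U_nonneg J1). lra. }
  assert ((1 * cK lam nseq b 1 (S J1))^2 <= b^2 * Rs^2 * (cK lam nseq b 1 J1)^2).
  { unfold cK. pose proof (lam_ratio (S J1) ltac:(lia)). replace (S J1 - 1)%nat with J1 in H by lia.
    set (l1 := lam (nseq J1 - 1)%nat) in *. set (l2 := lam (nseq (S J1) - 1)%nat) in *.
    assert (0 < l1) by apply Hlam. assert (0 < l2) by apply Hlam.
    replace ((1 * (1 * b ^ S J1 / l2)) ^ 2) with ((b ^ J1)^2 * b^2 / l2^2) by (simpl; field; lra).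
    replace (b ^ 2 * Rs ^ 2 * (1 * b ^ J1 / l1) ^ 2) with ((b ^ J1)^2 * b^2 * (Rs^2 / l1^2)) by (field; lra).
    replace ((b ^ J1)^2 * b^2 / l2^2) with ((b ^ J1)^2 * b^2 * / l2^2) by (unfold Rdiv; ring).
    apply Rmult_le_compat_l. apply Rmult_le_pos; apply pow2_ge_0.
    assert (0 < Rs) by apply Rs_pos.
    assert (l1^2 <= Rs^2 * l2^2).
    { replace (Rs^2 * l2^2) with ((Rs * l2)^2) by ring. apply pow_incr. lra. }
    apply Rmult_le_reg_l with (l1^2 * l2^2). apply Rmult_lt_0_compat; apply pow_lt; lra.
    replace (l1 ^ 2 * l2 ^ 2 * / l2 ^ 2) with (l1^2) by (field; lra).
    unfold Rdiv. replace (l1 ^ 2 * l2 ^ 2 * (Rs ^ 2 * / l1 ^ 2)) with (Rs^2 * l2^2) by (field; lra). lra. }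
  assert (b^2*Rs^2*(cK lam nseq b 1 J1)^2 <= b^2*Rs^2*U J1).
  { apply Rmult_le_compat_l; auto. apply Rmult_le_pos; apply pow2_ge_0. }
  lra.
Qed.

Lemma block_bound : forall f i, (1 <= i)%nat ->
  Qs lam nseq f i <= Rs^2 * (lam (nseq i - 1)%nat)^2 * sum_n_m (fun m => f m ^ 2) (nseq (i - 1)) (nseq i - 1).
Proof.
  intros f i Hi. unfold Qs.
  pose proof (lam_ratio i Hi).
  assert (Hl : lam (nseq (i-1)) <= Rs * lam (nseq i - 1)%nat).
  { pose proof (lam_mono lam Hdec (nseq (i - 1) - 1) (nseq (i-1)) ltac:(lia)). lra. }
  rewrite <- (Rplus_0_r (_ * sum_n_m _ _ _)).
  replace (Rs ^ 2 * lam (nseq i - 1)%nat ^ 2 * sum_n_m (fun m : nat => f m ^ 2) (nseq (i - 1)) (nseq i - 1) + 0)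
    with ((Rs ^ 2 * lam (nseq i - 1)%nat ^ 2) * sum_n_m (fun m : nat => f m ^ 2) (nseq (i - 1)) (nseq i - 1) + 0 * sum_n_m (fun m : nat => f m ^ 2) (nseq (i - 1)) (nseq i - 1)) by ring.
  rewrite <- sum_lin. apply sum_le_loc. intros k Hk.
  pose proof (lam_mono lam Hdec (nseq (i-1)) k ltac:(lia)).
  pose proof (Hlam k). pose proof (Hlam (nseq (i-1))). pose proof (pow2_ge_0 (f k)).
  assert (lam k ^2 <= Rs ^ 2 * lam (nseq i - 1)%nat ^ 2).
  { assert (0 <= Rs * lam (nseq i - 1)%nat) by lra.
    replace (Rs ^ 2 * lam (nseq i - 1)%nat ^ 2) with ((Rs * lam (nseq i - 1)%nat)^2) by ring.
    apply pow_incr. lra. }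
  replace ((lam k * f k)^2) with (lam k ^2 * f k ^2) by ring. nra.
Qed.

Lemma fbound : forall f M, (forall j r, (1 <= j)%nat -> (1 <= r)%nat ->
    Defs.sigma lam nseq f (j + r) <= a * b ^ r * Defs.sigma lam nseq f j) ->
  (1 <= M)%nat ->
  forall m, (m <= M)%nat ->
  U m * Qs lam nseq f M <= a^2 * Rs^2 * (b^M)^2 * sum_n_m (fun k => f k ^ 2) (nseq 0) (nseq m - 1).
Proof.
  intros f M Hc HM m. induction m; intros Hm.
  - unfold U; simpl. rewrite sum_n_m_zero by lia.
    change (0 * Qs lam nseq f M <= a ^ 2 * Rs ^ 2 * (b ^ M) ^ 2 * 0). lra.
  - assert (Hlt := Hinc m).
    rewrite (sum_chasles _ (nseq 0) (nseq m - 1) (nseq (S m) - 1)).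
    2: { pose proof (nseq_le nseq Hinc 0 m ltac:(lia)). lia. } 2: lia.
    replace (S (nseq m - 1)) with (nseq m) by (pose proof (nseq_le nseq Hinc 0 m ltac:(lia)); lia).
    unfold U; simpl Csum. fold (U m).
    assert (IH := IHm ltac:(lia)).
    set (T := Qs lam nseq f M).
    set (Bi := sum_n_m (fun k => f k ^ 2) (nseq m) (nseq (S m) - 1)).
    assert (HT : T <= a^2 * (b^(M - S m))^2 * Qs lam nseq f (S m)).
    { destruct (Nat.eq_dec (S m) M).
      - subst M. unfold T. rewrite Nat.sub_diag, pow_O. pose proof (Qs_nonneg lam nseq f (S m)).
        assert (1 <= a^2) by nra. replace (a ^ 2 * 1 ^ 2 * Qs lam nseq f (S m)) with (a^2 * Qs lam nseq f (S m)) by ring.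
        nra.
      - specialize (Hc (S m) (M - S m)%nat ltac:(lia) ltac:(lia)).
        replace (S m + (M - S m))%nat with M in Hc by lia.
        rewrite !sigma_Qs in Hc. unfold T.
        pose proof (Qs_nonneg lam nseq f M). pose proof (Qs_nonneg lam nseq f (S m)).
        pose proof (sqrt_pos (Qs lam nseq f M)).
        assert (0 <= a * b ^ (M - S m)) by (apply Rmult_le_pos; [lra|apply pow_le; lra]).
        rewrite <- (sqrt_sqrt (Qs lam nseq f M)) by auto.
        rewrite <- (sqrt_sqrt (Qs lam nseq f (S m))) by auto.
        replace (a ^ 2 * (b ^ (M - S m)) ^ 2 * (sqrt (Qs lam nseq f (S m)) * sqrt (Qs lam nseq f (S m))))
          with ((a * b ^ (M - S m) * sqrt (Qs lam nseq f (S m))) * (a * b ^ (M - S m) * sqrt (Qs lam nseq f (S m)))) by ring.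
        apply Rmult_le_compat; auto. }
    assert (HB := block_bound f (S m) ltac:(lia)). replace (S m - 1)%nat with m in HB by lia. fold Bi in HB.
    assert (Hblk : (1 * cK lam nseq b 1 (S m))^2 * T <= a^2 * Rs^2 * (b^M)^2 * Bi).
    { unfold cK. set (l := lam (nseq (S m) - 1)%nat) in *. assert (0 < l) by apply Hlam.
      assert (0 <= T) by apply Qs_nonneg.
      assert (Ep : (b^M)^2 = (b^(S m))^2 * (b^(M - S m))^2).
      { rewrite <- Rpow_mult_distr, <- pow_add. f_equal. f_equal. lia. }
      replace ((1 * (1 * b ^ S m / l)) ^ 2) with ((b ^ S m)^2 / l^2) by (field; lra).
      assert (0 <= (b ^ S m)^2 / l^2) by (apply Rmult_le_pos; [apply pow2_ge_0| left; apply Rinv_0_lt_compat; nra]).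
      apply Rle_trans with ((b ^ S m)^2 / l^2 * (a^2 * (b^(M - S m))^2 * (Rs^2 * l^2 * Bi))).
      apply Rmult_le_compat_l; auto. apply Rle_trans with (a ^ 2 * (b ^ (M - S m)) ^ 2 * Qs lam nseq f (S m)); auto.
      apply Rmult_le_compat_l. apply Rmult_le_pos; apply pow2_ge_0. lra.
      rewrite Ep. right. field. lra. }
    change ((U m + (1 * cK lam nseq b 1 (S m)) ^ 2) * T <=
      a ^ 2 * Rs ^ 2 * (b ^ M) ^ 2 * (sum_n_m (fun k : nat => f k ^ 2) (nseq 0) (nseq m - 1) + Bi)).
    rewrite Rmult_plus_distr_r, Rmult_plus_distr_l. unfold T, Bi in *. lra.
Qed.

End FB.

Lemma data_At : forall lam nseq a b eps f k,
  length (data (Atilde lam nseq a b) eps f k) = k /\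
  forall i, (i < k)%nat -> nth i (data (Atilde lam nseq a b) eps f k) 0 = f i.
Proof.
  intros lam nseq a b eps f k. induction k as [|k [IHl IHn]].
  - split; auto. intros; lia.
  - simpl. rewrite length_app. simpl. rewrite IHl. split. lia.
    intros i Hi. destruct (Nat.eq_dec i k).
    + subst. rewrite app_nth2 by lia. rewrite IHl, Nat.sub_diag. reflexivity.
    + rewrite app_nth1 by lia. apply IHn. lia.
Qed.

Lemma sigma_ext : forall lam nseq g f j, (1 <= nseq j)%nat ->
  (forall i, (i < nseq j)%nat -> g i = f i) -> Defs.sigma lam nseq g j = Defs.sigma lam nseq f j.
Proof.
  intros. unfold Defs.sigma. f_equal. apply sum_n_m_ext_loc. intros k Hk. rewrite H0; auto. lia.
Qed.

Lemma Atilde_stop : forall lam nseq a b eps f k,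
  (forall k, (nseq k < nseq (S k))%nat) -> (1 <= nseq 0)%nat ->
  stops_at (Atilde lam nseq a b) eps f k ->
  exists J, (1 <= J)%nat /\ nseq J = k /\
    ((2 <= J)%nat -> eps * sqrt (1 - b^2) / (a * b) < Defs.sigma lam nseq f (J - 1)).
Proof.
  intros lam nseq a b eps f k Hinc H0 [Hs Hn].
  destruct Hs as [J [HJ [EJ Hsig]]].
  destruct (data_At lam nseq a b eps f k) as [Hl _]. rewrite Hl in EJ.
  exists J. split; auto. split; auto. intros HJ2.
  destruct (Rlt_or_le (eps * sqrt (1 - b^2) / (a * b)) (Defs.sigma lam nseq f (J - 1))) as [L|L]; auto.
  exfalso. apply (Hn (nseq (J - 1)%nat)).
  { rewrite <- EJ. apply nseq_lt; auto. lia. }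
  destruct (data_At lam nseq a b eps f (nseq (J - 1)%nat)) as [Hl' Hn'].
  cbn [stop Atilde]. exists (J - 1)%nat. split. lia. split. auto.
  rewrite (sigma_ext lam nseq _ f). auto.
  pose proof (nseq_le nseq Hinc 0 (J - 1) ltac:(lia)). lia.
  intros i Hi. apply Hn'; auto.
Qed.

Lemma arith : forall a b R d eps rho q V W Y,
  1 < a -> 0 < b < 1 -> 0 < d -> 0 < eps -> 0 < rho -> 0 < V -> 0 < W ->
  W <= (1 + b^2 * R^2) * V -> 0 <= q -> q * V <= a^2 * R^2 * Y * rho^2 -> 0 < Y ->
  eps^2 * (1 - b^2) < a^2 * b^2 * q ->
  (d * (1 - b^2) / (a^2 * (1 + R^2)^2) * eps)^2 * W < d^2 * rho^2 * b^2 * Y.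
Proof.
  intros a b R d eps rho q V W Y Ha Hb Hd He Hr HV HW HWV Hq HqV HY Heps.
  set (t := 1 - b^2). assert (Ht : 0 < t < 1) by (unfold t; split; nra).
  set (P := 1 + R^2). assert (HP : 1 <= P) by (unfold P; nra).
  set (w := d * t / (a^2 * P^2)).
  assert (Hw : 0 < w) by (unfold w; apply Rdiv_lt_0_compat; [apply Rmult_lt_0_compat; lra | apply Rmult_lt_0_compat; apply pow_lt; lra]).
  assert (S1 : (w * eps)^2 * W <= (w * eps)^2 * (P * V)).
  { apply Rmult_le_compat_l. apply pow2_ge_0. unfold P. assert (b^2 <= 1) by nra.
    assert (b^2 * R^2 <= R^2) by nra. nra. }
  assert (S2 : eps^2 * t * V < a^4 * b^2 * R^2 * Y * rho^2).
  { apply Rlt_le_trans with (a^2 * b^2 * q * V).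
    apply Rmult_lt_compat_r; auto.
    replace (a ^ 4 * b ^ 2 * R ^ 2 * Y * rho ^ 2) with (a^2 * b^2 * (a^2 * R^2 * Y * rho^2)) by ring.
    replace (a ^ 2 * b ^ 2 * q * V) with (a^2 * b^2 * (q * V)) by ring.
    apply Rmult_le_compat_l; auto. nra. }
  assert (Ew : w^2 * P * a^4 = d^2 * t^2 / P^3).
  { unfold w. field. split; nra. }
  assert (S3 : (w * eps)^2 * (P * V) * t < d^2 * t^2 / P^3 * (b^2 * R^2 * Y * rho^2)).
  { rewrite <- Ew.
    replace ((w * eps) ^ 2 * (P * V) * t) with ((w^2 * P) * (eps^2 * t * V)) by ring.
    replace (w ^ 2 * P * a ^ 4 * (b ^ 2 * R ^ 2 * Y * rho ^ 2)) with ((w^2 * P) * (a ^ 4 * b ^ 2 * R ^ 2 * Y * rho ^ 2)) by ring.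
    apply Rmult_lt_compat_l; auto. nra. }
  assert (S4 : d^2 * t^2 / P^3 * (b^2 * R^2 * Y * rho^2) <= d^2 * t * b^2 * Y * rho^2).
  { assert (R^2 <= P^3).
    { assert (R^2 <= P) by (unfold P; lra). assert (P <= P^3) by nra. lra. }
    assert (0 < P^3) by (apply pow_lt; lra).
    replace (d ^ 2 * t ^ 2 / P ^ 3 * (b ^ 2 * R ^ 2 * Y * rho ^ 2)) with
      ((d^2 * t^2 * b^2 * Y * rho^2) * (R^2 / P^3)) by (field; lra).
    assert (R^2 / P^3 <= 1). { apply Rmult_le_reg_r with (P^3); auto. field_simplify; lra. }
    assert (0 <= d^2 * t^2 * b^2 * Y * rho^2).
    { repeat apply Rmult_le_pos; try apply pow2_ge_0; lra. }
    apply Rle_trans with (d ^ 2 * t ^ 2 * b ^ 2 * Y * rho ^ 2). nra.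
    assert (0 <= d^2 * b^2 * Y * rho^2) by (repeat apply Rmult_le_pos; try apply pow2_ge_0; lra).
    replace (d ^ 2 * t ^ 2 * b ^ 2 * Y * rho ^ 2) with ((d^2 * b^2 * Y * rho^2) * t^2) by ring.
    replace (d ^ 2 * t * b ^ 2 * Y * rho ^ 2) with ((d^2 * b^2 * Y * rho^2) * t) by ring.
    apply Rmult_le_compat_l; auto. nra. }
  assert (S5 : (w * eps)^2 * W * t < d^2 * t * b^2 * Y * rho^2).
  { assert ((w * eps)^2 * W * t <= (w * eps)^2 * (P * V) * t) by (apply Rmult_le_compat_r; lra). lra. }
  change (d * (1 - b ^ 2) / (a ^ 2 * (1 + R ^ 2) ^ 2)) with w.
  apply Rmult_lt_reg_r with t. lra.
  replace (d ^ 2 * rho ^ 2 * b ^ 2 * Y * t) with (d ^ 2 * t * b ^ 2 * Y * rho ^ 2) by ring. auto.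
Qed.

Lemma sqrt_sq : forall x, 0 <= x -> sqrt x ^ 2 = x.
Proof. intros x Hx. simpl. rewrite Rmult_1_r. apply sqrt_sqrt; auto. Qed.

Lemma lower_gen : forall lam (H : (nat -> R) -> Prop) A e f0 k0 N T,
  (forall i, 0 < lam i) ->
  solves lam H A -> 0 < e -> e < T -> l2 f0 -> l2 (Sop lam f0) ->
  stops_at A e f0 k0 ->
  (forall h, (forall m, (N <= m)%nat -> h m = 0) -> Series (fun i => Sop lam h i ^ 2) = T^2 ->
     H (fun i => f0 i + h i) /\ H (fun i => f0 i - h i)) ->
  (N <= k0)%nat.
Proof.
  intros lam H A e f0 k0 N T Hlam Hsol He HeT Hf0 HSf0 Hst HP.
  destruct (le_lt_dec N k0) as [L|L]; auto. exfalso.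
  assert (Hbl : forall d, bounded_linear (query A e d)) by (intros d; apply (proj1 Hsol e d He)).
  destruct (kernel (map (fun m => query A e (data A e f0 m)) (seq 0 k0))) with (Sl := seq 0 N)
    as [h [Hs [[j Hj] Hk]]].
  { intros L' HL'. apply in_map_iff in HL'. destruct HL' as [m [<- _]].
    destruct (Hbl (data A e f0 m)) as [Ha [Hm _]]. split; auto. }
  { apply seq_NoDup. }
  { rewrite length_map, !length_seq. auto. }
  assert (Hz : forall m, (N <= m)%nat -> h m = 0).
  { intros m Hm. apply Hs. intro Hin. apply in_seq in Hin. lia. }
  assert (Hhl : l2 h) by (apply l2_finsupp with N; auto).
  assert (HSz : forall m, (N <= m)%nat -> Sop lam h m ^ 2 = 0).
  { intros m Hm. unfold Sop. rewrite Hz; auto. ring. }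
  assert (Hex : ex_series (fun i => Sop lam h i ^ 2)) by (apply ex_series_finsupp with N; auto).
  set (X := Series (fun i => Sop lam h i ^ 2)).
  assert (HX : 0 < X).
  { apply Rlt_le_trans with (sum_n_m (fun i => Sop lam h i ^ 2) j j).
    rewrite sum_n_n. unfold Sop. pose proof (Hlam j).
    assert (lam j * h j <> 0) by (apply Rmult_integral_contrapositive; split; lra).
    apply pow2_gt_0; auto.
    apply sum_le_Series; auto. intros; apply pow2_ge_0. }
  set (c := T / sqrt X).
  set (h' := fun i => c * h i).
  assert (Hz' : forall m, (N <= m)%nat -> h' m = 0).
  { intros m Hm. unfold h'. rewrite Hz; auto; ring. }
  assert (Hh'l : l2 h') by (apply l2_finsupp with N; auto).
  assert (HSer : Series (fun i => Sop lam h' i ^ 2) = T^2).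
  { rewrite (Series_ext _ (fun i => c^2 * (Sop lam h i ^ 2))) by (intros; unfold h', Sop; ring).
    rewrite Series_scal_l. fold X. unfold c.
    assert (0 < sqrt X) by (apply sqrt_lt_R0; auto).
    unfold Rdiv. rewrite Rpow_mult_distr. rewrite pow_inv.
    replace (sqrt X ^ 2) with X. field. lra.
    rewrite sqrt_sq; lra. }
  destruct (HP h' Hz' HSer) as [Hp Hm].
  assert (Hfool := fool lam H A e f0 k0 h' Hsol He Hf0 Hh'l HSf0).
  rewrite HSer in Hfool.
  assert (T^2 <= e^2).
  { apply Hfool; auto.
    - apply l2_finsupp with N. intros m Hm'. unfold Sop. rewrite Hz'; auto. ring.
    - intros m Hm'. unfold h'. destruct (Hbl (data A e f0 m)) as [_ [Hsc _]].
      rewrite Hsc; auto. rewrite Hk. ring. apply in_map_iff. exists m. split; auto.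
      apply in_seq. lia. }
  nra.
Qed.

Theorem theorem3 :
  forall (a b Rsup : R), 0 < b < 1 -> 1 < a ->
  exists omega : R, 0 < omega /\
  forall (lam : nat -> R) (nseq : nat -> nat),
    (forall i, 0 < lam i) ->
    (forall i, lam (S i) <= lam i) ->
    is_lim_seq lam 0 ->
    (forall k, (nseq k < nseq (S k))%nat) ->
    (1 <= nseq 0)%nat ->
    is_lub (fun x => exists k, (1 <= k)%nat /\ x = ratio lam nseq k) Rsup ->
    forall eps rho, 0 < eps -> 0 < rho ->
      Rbar_le (cost (Atilde lam nseq a b) (inC lam nseq a b) eps rho)
              (complexity lam (inC lam nseq a b) (omega * eps) rho).
Proof.
  intros a b Rsup Hb Ha.
  destruct (dlt_facts a Ha) as [Hd1 [Hd2 Hd3]].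
  set (d := dlt a) in *.
  exists (d * (1 - b^2) / (a^2 * (1 + Rsup^2)^2)).
  split.
  { apply Rdiv_lt_0_compat. apply Rmult_lt_0_compat; nra.
    apply Rmult_lt_0_compat. nra. apply pow_lt. nra. }
  intros lam nseq Hlam Hdec _ Hinc H0 Hlub eps rho Heps Hrho.
  set (om := d * (1 - b^2) / (a^2 * (1 + Rsup^2)^2)).
  assert (Hom : 0 < om).
  { apply Rdiv_lt_0_compat. apply Rmult_lt_0_compat; nra.
    apply Rmult_lt_0_compat. nra. apply pow_lt. nra. }
  assert (HR : forall k, (1 <= k)%nat -> ratio lam nseq k <= Rsup).
  { intros k Hk. apply (proj1 Hlub). exists k; auto. }
  set (e := om * eps). assert (He : 0 < e) by (unfold e; nra).
  unfold cost, complexity.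
  apply (proj2 (Lub_Rbar_correct _)).
  intros x [f [k [HC [Hn [Hst ->]]]]].
  apply (proj2 (Glb_Rbar_correct _)).
  intros y [A [Hsol Hc]].
  assert (Main : exists f0 k0, inC lam nseq a b f0 /\ nrm f0 <= rho /\ stops_at A e f0 k0 /\ (k <= k0)%nat).
  { destruct (Atilde_stop lam nseq a b eps f k Hinc H0 Hst) as [J [HJ [EJ Hsig]]].
    subst k.
    destruct (Nat.eq_dec J 1) as [EJ1|EJ1].
    -
      subst J.
      set (f0 := fun _ : nat => 0).
      assert (Hf0C : inC lam nseq a b f0) by (apply inC_zero_above1; auto; lra).
      destruct (proj2 Hsol f0 e Hf0C He) as [k0 [Hst0 _]].
      exists f0, k0. split; auto. split.
      { unfold nrm, f0. rewrite (Series_ext _ (fun _ => 0)) by (intros; simpl; ring).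
        rewrite Series_zero, sqrt_0. lra. }
      split; auto.
      apply (lower_gen lam (inC lam nseq a b) A e f0 k0 (nseq 1%nat) (e + 1)); auto; try lra.
      + apply l2_finsupp with 0%nat. intros; reflexivity.
      + apply l2_finsupp with 0%nat. intros; unfold Sop, f0; ring.
      + intros h Hh _. split; apply inC_zero_above1; auto; try lra;
          intros m Hm; unfold f0; rewrite Hh; auto; ring.
    -
      assert (HJ2 : (2 <= J)%nat) by lia. specialize (Hsig HJ2).
      assert (HUJ : 0 < U lam nseq b J).
      { destruct J as [|J1]. lia. unfold U. rewrite Csum_S. fold (U lam nseq b J1).
        pose proof (U_nonneg lam nseq b J1).
        assert (0 < 1 * cK lam nseq b 1 (S J1)).
        { unfold cK. rewrite Rmult_1_l. apply Rdiv_lt_0_compat. rewrite Rmult_1_l. apply pow_lt; lra. apply Hlam. }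
        assert (0 < (1 * cK lam nseq b 1 (S J1))^2) by (apply pow_lt; auto). lra. }
      set (K := rho / sqrt (U lam nseq b J)).
      assert (HK : 0 < K) by (unfold K; apply Rdiv_lt_0_compat; auto; apply sqrt_lt_R0; auto).
      set (f0 := fstar nseq (cK lam nseq b K) J).
      assert (Hz0 : forall m, (nseq J <= m)%nat -> f0 m = 0).
      { intros m Hm. unfold f0. apply fs_zero_above; auto. }
      assert (Hf0C : inC lam nseq a b f0).
      { assert (E : f0 = fun m => fstar nseq (cK lam nseq b K) J m + (fun _ => 0) m).
        { apply functional_extensionality; intros; unfold f0; ring. }
        rewrite E. apply cone_pert; auto; try lia.
        intros i. unfold Qs. rewrite (sum_n_m_ext _ (fun _ => 0)) by (intros; simpl; ring).
        rewrite sum0. apply pow2_ge_0. }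
      destruct (proj2 Hsol f0 e Hf0C He) as [k0 [Hst0 _]].
      exists f0, k0. split; auto. split.
      { unfold nrm. rewrite (Series_finsupp _ (nseq J - 1)).
        2: { intros m Hm. rewrite Hz0. ring. pose proof (nseq_le nseq Hinc 0 J ltac:(lia)). lia. }
        rewrite (sum_n_m_ext _ (fun m => ((fun _ => 1) m * fstar nseq (cK lam nseq b K) J m)^2))
          by (intros; unfold f0; simpl; ring).
        rewrite (fs_prefix nseq Hinc H0) by lia.
        rewrite Csum_scale; auto. unfold K.
        unfold Rdiv. rewrite Rpow_mult_distr, pow_inv.
        replace (sqrt (U lam nseq b J) ^ 2) with (U lam nseq b J).
        replace (rho ^ 2 * / U lam nseq b J * U lam nseq b J) with (rho^2) by (field; lra).
        rewrite sqrt_pow2; lra.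
        rewrite sqrt_sq; nra. }
      split; auto.
      set (eta := dlt a * K * b ^ J).
      apply (lower_gen lam (inC lam nseq a b) A e f0 k0 (nseq J) eta); auto.
      +
        destruct HC as [Hfl Hcone].
        set (q := Qs lam nseq f (J - 1)).
        assert (Hq : 0 <= q) by apply Qs_nonneg.
        set (V := U lam nseq b (J - 1)).
        assert (HV : 0 < V).
        { unfold V. destruct J as [|[|J2]]; try lia. simpl (S (S J2) - 1)%nat.
          unfold U. rewrite Csum_S. fold (U lam nseq b J2).
          pose proof (U_nonneg lam nseq b J2).
          assert (0 < 1 * cK lam nseq b 1 (S J2)).
          { unfold cK. rewrite Rmult_1_l. apply Rdiv_lt_0_compat. rewrite Rmult_1_l. apply pow_lt; lra. apply Hlam. }
          assert (0 < (1 * cK lam nseq b 1 (S J2))^2) by (apply pow_lt; auto). lra. }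
        assert (HW : U lam nseq b J <= (1 + b^2 * Rsup^2) * V).
        { unfold V. replace J with (S (J - 1)) at 1 by lia. apply U_step; auto. lia. }
        assert (HSf : Series (fun i => f i ^ 2) <= rho^2) by (apply sqrt_le_sq; auto).
        assert (HqV : q * V <= a^2 * Rsup^2 * (b^(J-1))^2 * rho^2).
        { unfold q, V. rewrite Rmult_comm.
          eapply Rle_trans. apply (fbound lam nseq a b Rsup Hlam Hdec Hinc H0 Hb Ha HR f (J - 1)); auto; lia.
          apply Rmult_le_compat_l. apply Rmult_le_pos; [apply Rmult_le_pos|]; apply pow2_ge_0.
          eapply Rle_trans. apply sum_le_Series; auto. intros; apply pow2_ge_0. auto. }
        assert (HY : 0 < (b^(J-1))^2) by (apply pow_lt, pow_lt; lra).
        assert (Hth : eps^2 * (1 - b^2) < a^2 * b^2 * q).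
        { rewrite sigma_Qs in Hsig. fold q in Hsig.
          assert (Hs1 : 0 < 1 - b^2) by nra.
          assert (0 <= eps * sqrt (1 - b ^ 2) / (a * b)).
          { apply Rmult_le_pos. apply Rmult_le_pos. lra. apply sqrt_pos.
            left; apply Rinv_0_lt_compat; nra. }
          assert (Hsq : (eps * sqrt (1 - b ^ 2) / (a * b))^2 < q).
          { assert (Hxx : (eps * sqrt (1 - b ^ 2) / (a * b)) * (eps * sqrt (1 - b ^ 2) / (a * b)) < sqrt q * sqrt q)
              by (apply Rmult_le_0_lt_compat; auto).
            rewrite sqrt_sqrt in Hxx by auto. replace ((eps * sqrt (1 - b ^ 2) / (a * b))^2) with
              ((eps * sqrt (1 - b ^ 2) / (a * b)) * (eps * sqrt (1 - b ^ 2) / (a * b))) by ring. auto. }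
          replace ((eps * sqrt (1 - b ^ 2) / (a * b))^2) with (eps^2 * (1 - b^2) / (a^2 * b^2)) in Hsq.
          2: { unfold Rdiv. rewrite !Rpow_mult_distr. rewrite pow_inv. rewrite Rpow_mult_distr.
               replace (sqrt (1 - b^2) ^ 2) with (1 - b^2). reflexivity.
               rewrite sqrt_sq; nra. }
          assert (0 < a^2 * b^2) by (apply Rmult_lt_0_compat; apply pow_lt; lra).
          apply Rmult_lt_compat_r with (r := a^2 * b^2) in Hsq; auto.
          replace (eps ^ 2 * (1 - b ^ 2) / (a ^ 2 * b ^ 2) * (a ^ 2 * b ^ 2)) with (eps^2 * (1 - b^2)) in Hsq
            by (field; split; lra). lra. }
        assert (Har := arith a b Rsup d eps rho q V (U lam nseq b J) ((b^(J-1))^2) Ha Hb Hd1 Heps Hrho HV HUJ HW Hq HqV HY Hth).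
        fold om in Har. fold e in Har.
        assert (Heta2 : eta^2 = d^2 * rho^2 * b^2 * (b^(J-1))^2 / U lam nseq b J).
        { assert (EbJ : b^J = b * b^(J-1)) by (replace J with (S (J-1)) at 1 by lia; reflexivity).
          assert (EU : sqrt (U lam nseq b J) ^ 2 = U lam nseq b J) by (apply sqrt_sq; lra).
          assert (0 < sqrt (U lam nseq b J)) by (apply sqrt_lt_R0; auto).
          unfold eta, K. rewrite EbJ. fold d. rewrite <- EU at 2.
          generalize (sqrt (U lam nseq b J)) H (b ^ (J - 1)). intros s Hs Y. field. lra. }
        assert (Heta : 0 < eta) by (unfold eta; fold d; apply Rmult_lt_0_compat; [apply Rmult_lt_0_compat; auto| apply pow_lt; lra]).
        assert (e^2 < eta^2).
        { rewrite Heta2. apply Rmult_lt_reg_r with (U lam nseq b J); auto.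
          replace (d ^ 2 * rho ^ 2 * b ^ 2 * (b ^ (J - 1)) ^ 2 / U lam nseq b J * U lam nseq b J)
            with (d ^ 2 * rho ^ 2 * b ^ 2 * (b ^ (J - 1)) ^ 2) by (field; lra). auto. }
        destruct (Rlt_or_le e eta); auto. exfalso. nra.
      + apply l2_finsupp with (nseq J); auto.
      + apply l2_finsupp with (nseq J). intros; unfold Sop; rewrite Hz0; auto; ring.
      + intros h Hh HSer.
        assert (HQ : forall h', (forall m, (nseq J <= m)%nat -> h' m = 0) ->
                  Series (fun i => Sop lam h' i ^ 2) = eta^2 ->
                  forall i, Qs lam nseq h' i <= (dlt a * K * b ^ J)^2).
        { intros h' Hh' HS' i. replace ((dlt a * K * b ^ J)^2) with (eta^2) by reflexivity. rewrite <- HS'. unfold Qs.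
          apply sum_le_Series. intros; apply pow2_ge_0.
          apply ex_series_finsupp with (nseq J). intros; unfold Sop; rewrite Hh'; auto; ring. }
        split.
        * apply cone_pert; auto; try lia; apply HQ; auto.
        * assert (E : (fun i => f0 i - h i) = fun m => fstar nseq (cK lam nseq b K) J m + (fun m => - h m) m).
          { apply functional_extensionality; intros; unfold f0; ring. }
          rewrite E. apply cone_pert; auto; try lia.
          all: try (intros m Hm; rewrite Hh; auto; ring).
          all: apply HQ; [intros m Hm; rewrite Hh; auto; ring | rewrite <- HSer; apply Series_ext; intros; unfold Sop; ring]. }
  destruct Main as [f0 [k0 [Hf0 [Hn0 [Hst0 Hk]]]]].
  assert (Hle : Rbar_le (INR k0) (cost A (inC lam nseq a b) e rho)).
  { unfold cost. apply (proj1 (Lub_Rbar_correct _)). exists f0, k0. auto. }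
  rewrite Hc in Hle. simpl in Hle.
  simpl. apply le_INR in Hk. lra.
Qed.
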